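(* Let $A$ be a Lie conformal algebra, $M$ an $A$-module and $k\ge1$. If one of $a_1,\dots,a_k\in A$ is a torsion element of the $\mathbb F[\partial]$-module $A$, then $a_1\otimes\cdots\otimes a_k\otimes\phi=0$ in $\tilde\Gamma_k(A,M)$ for every $\phi$. In particular $\tilde\Gamma_k$ can be identified with the quotient of $\bar A^{\otimes k}\otimes\mathrm{Hom}(\mathbb F[\lambda_1,\dots,\lambda_k],M)$ by the relations (C1), (C2), where $\bar A=A/\mathrm{Tor}\,A$.
   Context: $\mathbb F$ field of characteristic 0; $A$ a Lie conformal algebra, $M$ an $A$-module (with $\partial$ acting on $M$ as $\partial^M$). $\mathrm{Hom}(\mathbb F[\lambda_1,\dots,\lambda_k],M)$ denotes the $\mathbb F$-linear maps. For $\phi$ in it, $\lambda_i^*\phi$ is $f\mapsto\phi(\lambda_if)$ and, for $\sigma\in S_k$, $\sigma^*\phi$ is $f(\lambda_1,\dots,\lambda_k)\mapsto\phi(f(\lambda_{\sigma(1)},\dots,\lambda_{\sigma(k)}))$. The space of basic $k$-chains $\tilde\Gamma_k(A,M)$ is the quotient of $A^{\otimes k}\otimes\mathrm{Hom}(\mathbb F[\lambda_1,\dots,\lambda_k],M)$ by the relations (C1) $a_1\otimes\cdots\otimes\partial a_i\otimes\cdots\otimes a_k\otimes\phi=-a_1\otimes\cdots\otimes a_k\otimes\lambda_i^*\phi$; (C2) $a_{\sigma(1)}\otimes\cdots\otimes a_{\sigma(k)}\otimes\sigma^*\phi=\mathrm{sign}(\sigma)\,a_1\otimes\cdots\otimes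 a_k\otimes\phi$ for all $\sigma\in S_k$. *)

(* Defs.v *)
From HB Require Import structures.
From mathcomp Require Import all_boot all_order all_algebra all_fingroup.
From mathcomp Require Import mpoly.
Set Implicit Arguments. Unset Strict Implicit. Unset Printing Implicit Defensive.
Import GRing.Theory.
Local Open Scope ring_scope.

Definition is_lin (F : fieldType) (U V : lmodType F) (f : U -> V) : Prop :=
  forall (c : F) (u v : U), f (c *: u + v) = c *: f u + f v.

Definition fin_supp (V : zmodType) (c : nat -> V) : Prop :=
  exists N, forall j, (N <= j)%N -> c j = 0.

(* coefficient of lambda^(j-1), or 0 when j = 0 : the coefficients of lambda * P(lambda) *)
Definition shift1 (V : zmodType) (c : nat -> V) (j : nat) : V :=
  if j is j'.+1 then c j' else 0.

Section LCA.
Variables (F : fieldType) (A : lmodType F).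

(* A Lie conformal algebra: an F[d]-module A (d = D, an F-linear endomorphism)
   with a lambda-bracket [a_lambda b] = \sum_j lambda^j br a b j  (in A[lambda]). *)
Definition is_LCA (D : A -> A) (br : A -> A -> nat -> A) : Prop :=
  [/\ is_lin D /\
      ((forall b j, is_lin (fun a => br a b j)) /\ (forall a j, is_lin (fun b => br a b j))),
      (forall a b, fin_supp (br a b)),
      (* [d a _lambda b] = - lambda [a_lambda b] *)
      (forall a b j, br (D a) b j = - shift1 (br a b) j) /\
      (* [a_lambda d b] = (d + lambda) [a_lambda b] *)
      (forall a b j, br a (D b) j = D (br a b j) + shift1 (br a b) j),
      (* skew-symmetry  [b_lambda a] = - [a_{-lambda-d} b] *)
      (forall a b N, (forall n, (N <= n)%N -> br a b n = 0) ->
         forall j, br b a j =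
           - \sum_(n < N) (((-1) ^+ n * ('C(n, j))%:R) *: iter (n - j)%N D (br a b n)))
    & (* Jacobi  [a_lambda [b_mu c]] = [[a_lambda b]_{lambda+mu} c] + [b_mu [a_lambda c]],
         coefficient of lambda^p mu^q *)
      (forall a b c p q, br a (br b c q) p =
         \sum_(s < p.+1) (('C((s + q)%N, s))%:R *: br (br a b (p - s)%N) c (s + q)%N)
         + br b (br a c p) q)].

Variables (M : lmodType F).

(* An A-module M: an F[d]-module (d acting as DM) with lambda-action
   a_lambda v = \sum_j lambda^j act a v j  (in M[lambda]). *)
Definition is_LCA_module (D : A -> A) (br : A -> A -> nat -> A)
    (DM : M -> M) (act : A -> M -> nat -> M) : Prop :=
  [/\ is_lin DM /\
      ((forall v j, is_lin (fun a => act a v j)) /\ (forall a j, is_lin (fun v => act a v j))),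
      (forall a v, fin_supp (act a v)),
      (* (d a)_lambda v = - lambda a_lambda v *)
      (forall a v j, act (D a) v j = - shift1 (act a v) j),
      (* a_lambda (d v) = (d + lambda) a_lambda v *)
      (forall a v j, act a (DM v) j = DM (act a v j) + shift1 (act a v) j)
    & (* a_lambda (b_mu v) - b_mu (a_lambda v) = [a_lambda b]_{lambda+mu} v,
         coefficient of lambda^p mu^q *)
      (forall a b v p q, act a (act b v q) p - act b (act a v p) q =
         \sum_(s < p.+1) (('C((s + q)%N, s))%:R *: act (br a b (p - s)%N) v (s + q)%N))].

Definition torsion (D : A -> A) (a : A) : Prop :=
  exists2 p : {poly F}, p != 0 & \sum_(i < size p) (p`_i *: iter i D a) = 0.

Variable (k : nat).

Definition upd (a : 'I_k -> A) (i : 'I_k) (x : A) : 'I_k -> A :=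
  fun j => if j == i then x else a j.

(* Hom(F[lambda_1..lambda_k], M) : the F-linear maps {mpoly F[k]} -> M (is_lin).
   lambda_i^* phi  and  sigma^* phi : *)
Definition lam_pull (i : 'I_k) (phi : {mpoly F[k]} -> M) : {mpoly F[k]} -> M :=
  fun f => phi ('X_i * f).
Definition perm_pull (s : 'S_k) (phi : {mpoly F[k]} -> M) : {mpoly F[k]} -> M :=
  fun f => phi (msym s f).

(* Linear maps out of  A^{(x)k} (x) Hom(F[lambda_1..lambda_k], M)  that kill the
   relations (C1), (C2), i.e. (by the universal property of the tensor product
   over F and of the quotient) linear maps out of  ~Gamma_k(A,M) : multilinear
   maps f(a_1,...,a_k, phi) into an F-vector space W satisfying (C1), (C2). *)
Definition chain_functional (D : A -> A) (W : lmodType F)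
    (f : ('I_k -> A) -> ({mpoly F[k]} -> M) -> W) : Prop :=
  [/\ (forall a i (c : F) x y phi, is_lin phi ->
         f (upd a i (c *: x + y)) phi = c *: f (upd a i x) phi + f (upd a i y) phi),
      (forall a (c : F) phi psi, is_lin phi -> is_lin psi ->
         f a (fun g => c *: phi g + psi g) = c *: f a phi + f a psi),
      (forall a i phi, is_lin phi ->
         f (upd a i (D (a i))) phi = - f a (lam_pull i phi))
    &
      (forall a (s : 'S_k) phi, is_lin phi ->
         f (fun j => a (s j)) (perm_pull s phi) = ((-1) ^+ s : F) *: f a phi)].

(* Equality of the classes of a_1 (x) ... (x) a_k (x) phi and b_1 (x)...(x) b_k (x) psi
   in ~Gamma_k(A,M): every linear map out of ~Gamma_k(A,M) agrees on them. *)
Definition chain_eq (D : A -> A) (a : 'I_k -> A) (phi : {mpoly F[k]} -> M)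
    (b : 'I_k -> A) (psi : {mpoly F[k]} -> M) : Prop :=
  forall (W : lmodType F) (f : ('I_k -> A) -> ({mpoly F[k]} -> M) -> W),
    chain_functional D f -> f a phi = f b psi.

Definition chain_zero (D : A -> A) (a : 'I_k -> A) (phi : {mpoly F[k]} -> M) : Prop :=
  forall (W : lmodType F) (f : ('I_k -> A) -> ({mpoly F[k]} -> M) -> W),
    chain_functional D f -> f a phi = 0.

End LCA.

(* Main.v *)
Require Import Defs.
From HB Require Import structures.
From mathcomp Require Import all_boot all_order all_algebra all_fingroup.
From mathcomp Require Import mpoly.
From mathcomp Require Import zify ssrcomplements.
From Stdlib Require Import FunctionalExtensionality.
Set Implicit Arguments. Unset Strict Implicit. Unset Printing Implicit Defensive.
Import GRing.Theory.
Local Open Scope ring_scope.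

Section Rec.
Variables (F : fieldType) (M : lmodType F) (k : nat) (i : 'I_k).
Variables (N : nat) (c : nat -> F) (phi : {mpoly F[k]} -> M).
Hypothesis cN : c N != 0.

Fixpoint sF (b : 'X_{1..k}) (t e : nat) : M :=
  match t with
  | 0 => 0
  | t'.+1 => if (e < N)%N then 0 else
      (c N)^-1 *: (phi 'X_[b + U_(i) *+ (e - N)] - \sum_(n < N) c n *: sF b t' (e - N + n)%N)
  end.

Lemma sF_stable b B : forall e t1 t2, (e < B)%N -> (e < t1)%N -> (e < t2)%N ->
  sF b t1 e = sF b t2 e.
Proof.
elim: B => [//|B IH] e [//|t1] [//|t2] eB et1 et2 /=.
case: ifP => // /negbT; rewrite -leqNgt => Ne.
congr (_ *: (_ - _)); apply: eq_bigr => n _; congr (_ *: _).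
have lt : (e - N + n < e)%N.
  have := ltn_ord n; lia.
apply: IH; lia.
Qed.

Definition sq b e := sF b e.+1 e.

Lemma sq_rec b e : c N *: sq b (e + N) + \sum_(n < N) c n *: sq b (e + n) =
  phi 'X_[b + U_(i) *+ e].
Proof.
rewrite /sq /= ifF; last by apply/negbTE; rewrite -leqNgt leq_addl.
rewrite scalerA divff // scale1r addnK.
rewrite [X in _ - X + _](_ : _ = \sum_(n < N) c n *: sF b (e + n).+1 (e + n)) ?subrK //.
apply: eq_bigr => n _; congr (_ *: _); apply: (@sF_stable b (e+N).+1); have := ltn_ord n; lia.
Qed.
End Rec.

Lemma lin0 (F : fieldType) (U V : lmodType F) (f : U -> V) : is_lin f -> f 0 = 0.
Proof.
move=> fl; have := fl 1 0 0; rewrite scale1r addr0 scale1r => e.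
by apply/(addrI (f 0)); rewrite addr0 -e.
Qed.

Lemma lin_sum (F : fieldType) (U V : lmodType F) (f : U -> V) (T : Type)
  (s : seq T) (cc : T -> F) (v : T -> U) : is_lin f ->
  f (\sum_(x <- s) cc x *: v x) = \sum_(x <- s) cc x *: f (v x).
Proof.
move=> fl; elim: s => [|x s IH]; first by rewrite !big_nil lin0.
by rewrite !big_cons fl IH.
Qed.

Section Psi.
Variables (F : fieldType) (M : lmodType F) (k : nat) (h : 'X_{1..k} -> M).

Definition psi (g : {mpoly F[k]}) : M := \sum_(m <- msupp g) g@_m *: h m.

Lemma psiE K g : (msize g <= K)%N -> psi g = \sum_(m : 'X_{1..k < K}) g@_m *: h m.
Proof.
move=> lt_pk; pose I : subFinType _ := 'X_{1..k < K}.
rewrite /psi (big_mksub I) //=; first last.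
  by move=> x /msize_mdeg_lt /leq_trans; apply.
  by rewrite msupp_uniq.
by rewrite big_rmcond //= => m; move/memN_msupp_eq0 ->; rewrite scale0r.
Qed.

Lemma psi_lin : is_lin psi.
Proof.
move=> a u v; pose K := maxn (msize u) (msize v).
have hu : (msize u <= K)%N by rewrite leq_maxl.
have hv : (msize v <= K)%N by rewrite leq_maxr.
have huv : (msize (a *: u + v) <= K)%N.
  apply: leq_trans (msizeD_le _ _) _; rewrite geq_max hv andbT.
  exact: leq_trans (msizeZ_le _ _) hu.
rewrite (psiE huv) (psiE hu) (psiE hv) scaler_sumr -big_split /=.
by apply: eq_bigr => m _; rewrite mcoeffD mcoeffZ scalerDl scalerA.
Qed.

Lemma psiX m : psi 'X_[m] = h m.
Proof. by rewrite /psi msuppX big_seq1 mcoeffX eqxx scale1r. Qed.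

Lemma psi_main (i : 'I_k) (N : nat) (c : nat -> F) (phi : {mpoly F[k]} -> M) :
  is_lin phi ->
  (forall m, \sum_(n < N.+1) c n *: h (m + U_(i) *+ n)%MM = phi 'X_[m]) ->
  forall g, \sum_(n < N.+1) c n *: psi ('X_i ^+ n * g) = phi g.
Proof.
move=> phil hm g.
have Phil : is_lin (fun g => \sum_(n < N.+1) c n *: psi ('X_i ^+ n * g)).
  move=> a u v; rewrite scaler_sumr -big_split; apply: eq_bigr => n _ /=.
  by rewrite mulrDr -scalerAr psi_lin scalerDr !scalerA mulrC.
rewrite [in RHS](mpolyE g) lin_sum //.
rewrite {1}(mpolyE g) (lin_sum _ _ _ Phil); apply: eq_bigr => m _.
rewrite -hm; congr (_ *: _); apply: eq_bigr => n _.
by rewrite mpolyXn -mpolyXD psiX addmC.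
Qed.
End Psi.

Section Main.
Variables (F : fieldType) (A M : lmodType F) (k : nat) (D : A -> A).
Variables (W : lmodType F) (f : ('I_k -> A) -> ({mpoly F[k]} -> M) -> W).
Hypothesis fl1 : forall a i (c : F) x y phi, is_lin phi ->
         f (upd a i (c *: x + y)) phi = c *: f (upd a i x) phi + f (upd a i y) phi.
Hypothesis fl2 : forall a (c : F) phi psi, is_lin phi -> is_lin psi ->
         f a (fun g => c *: phi g + psi g) = c *: f a phi + f a psi.
Hypothesis fC1 : forall a i phi, is_lin phi ->
         f (upd a i (D (a i))) phi = - f a (lam_pull i phi).

Lemma upd_upd (a : 'I_k -> A) i y z : upd (upd a i y) i z = upd a i z.
Proof. by apply: functional_extensionality => j; rewrite /upd; case: eqP. Qed.
Lemma upd_at (a : 'I_k -> A) i y : upd a i y i = y.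
Proof. by rewrite /upd eqxx. Qed.
Lemma upd_id (a : 'I_k -> A) i : upd a i (a i) = a.
Proof. by apply: functional_extensionality => j; rewrite /upd; case: eqP => // ->. Qed.

Lemma f_upd0 a i phi : is_lin phi -> f (upd a i 0) phi = 0.
Proof.
move=> phil; have := fl1 a i 1 0 0 phil; rewrite scale1r addr0 scale1r => e.
by apply/(addrI (f (upd a i 0) phi)); rewrite addr0 -e.
Qed.

Lemma f_sum1 a i phi (T : Type) (s : seq T) (cc : T -> F) (y : T -> A) : is_lin phi ->
  f (upd a i (\sum_(x <- s) cc x *: y x)) phi = \sum_(x <- s) cc x *: f (upd a i (y x)) phi.
Proof.
move=> phil; elim: s => [|x s IH]; first by rewrite !big_nil f_upd0.
by rewrite !big_cons fl1 // IH.
Qed.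

Lemma lin_sumf (T : Type) (s : seq T) (cc : T -> F) (rho : T -> {mpoly F[k]} -> M) :
  (forall x, is_lin (rho x)) -> is_lin (fun g => \sum_(x <- s) cc x *: rho x g).
Proof.
move=> hl a u v; rewrite scaler_sumr -big_split; apply: eq_bigr => x _ /=.
by rewrite hl scalerDr !scalerA mulrC.
Qed.

Lemma f_zero2 a : f a (fun _ => 0) = 0.
Proof.
have zl : is_lin (fun _ : {mpoly F[k]} => (0 : M)) by move=> ? ? ?; rewrite ?scaler0 addr0.
have e := fl2 a 1 zl zl; rewrite scale1r in e.
have e2 : f a (fun _ => 0) + f a (fun _ => 0) = f a (fun _ => 0).
  rewrite scale1r in e; apply: etrans; first exact: (esym e).
  by congr (f a _); apply: functional_extensionality => g; rewrite ?scaler0 addr0.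
by apply/(addrI (f a (fun _ => 0))); rewrite addr0 e2.
Qed.

Lemma f_sum2 a (T : Type) (s : seq T) (cc : T -> F) (rho : T -> {mpoly F[k]} -> M) :
  (forall x, is_lin (rho x)) ->
  f a (fun g => \sum_(x <- s) cc x *: rho x g) = \sum_(x <- s) cc x *: f a (rho x).
Proof.
move=> hl; elim: s => [|x s IH].
  rewrite big_nil -(f_zero2 a); congr (f a _).
  by apply: functional_extensionality => g; rewrite big_nil.
have -> : (fun g => \sum_(y <- x :: s) cc y *: rho y g) =
   (fun g => cc x *: rho x g + \sum_(y <- s) cc y *: rho y g).
  by apply: functional_extensionality => g; rewrite big_cons.
by rewrite fl2 //= ?IH ?big_cons //; apply: lin_sumf.
Qed.

Definition pullX (i : 'I_k) n (rho : {mpoly F[k]} -> M) := fun g => rho ('X_i ^+ n * g).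

Lemma pullX_lin i n rho : is_lin rho -> is_lin (pullX i n rho).
Proof. by move=> rl a u v; rewrite /pullX mulrDr -scalerAr rl. Qed.

Lemma f_iter a i y n rho : is_lin rho ->
  f (upd a i (iter n D y)) rho = (-1) ^+ n *: f (upd a i y) (pullX i n rho).
Proof.
elim: n rho => [|n IH] rho rl.
  rewrite expr0 scale1r /=; congr (f _ _).
  by apply: functional_extensionality => g; rewrite /pullX expr0 mul1r.
rewrite /= -(upd_upd a i (iter n D y)).
rewrite -{2}(upd_at a i (iter n D y)) fC1 // IH; last first.
  by move=> c u v; rewrite /lam_pull mulrDr -scalerAr rl.
rewrite exprS mulN1r scaleNr; congr (- (_ *: f _ _)).
by apply: functional_extensionality => g; rewrite /pullX /lam_pull mulrA -exprS.
Qed.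
End Main.

Definition bm (k : nat) (i : 'I_k) (m : 'X_{1..k}) : 'X_{1..k} := (m - U_(i) *+ (m i))%MM.

Lemma bm_shift k (i : 'I_k) m n : bm i (m + U_(i) *+ n)%MM = bm i m.
Proof.
apply/mnmP => j; rewrite /bm !(mnmBE, mnmDE, mulmnE, mnm1E) eqxx.
case: eqP => [->|_]; lia.
Qed.

Lemma shift_at k (i : 'I_k) m n : (m + U_(i) *+ n)%MM i = (m i + n)%N.
Proof. by rewrite mnmDE mulmnE mnm1E eqxx mul1n. Qed.

Lemma bm_recover k (i : 'I_k) m : (bm i m + U_(i) *+ (m i))%MM = m.
Proof.
apply/mnmP => j; rewrite /bm !(mnmBE, mnmDE, mulmnE, mnm1E).
case: eqP => [->|_]; lia.
Qed.

Lemma part1 (F : fieldType) (A M : lmodType F) (k : nat) (D : A -> A)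
  (a : 'I_k -> A) (phi : {mpoly F[k]} -> M) (i : 'I_k) (p : {poly F}) :
  is_lin phi -> p != 0 -> \sum_(n < size p) (p`_n *: iter n D (a i)) = 0 ->
  chain_zero D a phi.
Proof.
move=> phil pn0 hp W f [fl1 fl2 fC1 _].
pose N := (size p).-1.
have sp : size p = N.+1 by rewrite /N prednK // size_poly_gt0.
pose c := fun n => (-1) ^+ n * p`_n.
have cN : c N != 0.
  rewrite /c mulf_neq0 ?signr_eq0 //.
  by have := pn0; rewrite -lead_coef_eq0 lead_coefE.
pose h := fun m : 'X_{1..k} => sq i N c phi (bm i m) (m i).
have key : forall g, \sum_(n < N.+1) c n *: psi h ('X_i ^+ n * g) = phi g.
  apply: psi_main => // m.
  rewrite big_ord_recr /= /h bm_shift shift_at addrC.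
  have := @sq_rec _ _ _ i N c phi cN (bm i m) (m i).
  rewrite bm_recover => <-; congr (_ + _).
  by apply: eq_bigr => n _; rewrite bm_shift shift_at.
have psil := psi_lin h.
have := f_upd0 fl1 a i psil; rewrite -hp -(upd_id a i).
rewrite upd_upd sp f_sum1 //.
under eq_bigr => n _ do rewrite (f_iter fC1) // upd_id scalerA.
rewrite -(f_sum2 fl2); last by move=> n; apply: pullX_lin.
rewrite upd_id => <-; congr (f a _); apply: functional_extensionality => g.
by rewrite -key; apply: eq_bigr => n _; rewrite /c mulrC.
Qed.

Theorem lemma3p2 (F : fieldType) (A M : lmodType F)
  (D : A -> A) (br : A -> A -> nat -> A) (DM : M -> M) (act : A -> M -> nat -> M)
  (k : nat) :
  [pchar F] =i pred0 ->
  is_LCA D br -> is_LCA_module D br DM act ->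
  (1 <= k)%N ->
  (forall (a : 'I_k -> A) (phi : {mpoly F[k]} -> M),
     is_lin phi -> (exists i, torsion D (a i)) -> chain_zero D a phi)
  /\
  (forall (a a' : 'I_k -> A) (phi : {mpoly F[k]} -> M),
     is_lin phi -> (forall i, torsion D (a i - a' i)) -> chain_eq D a phi a' phi).
Proof.
move=> _ _ _ _.
have P1 : forall (a : 'I_k -> A) (phi : {mpoly F[k]} -> M),
     is_lin phi -> (exists i, torsion D (a i)) -> chain_zero D a phi.
  by move=> a phi phil [i [p pn0 hp]]; apply: part1 phil pn0 hp.
split => // a a' phi phil ht W f fc.
have [fl1 _ _ _] := fc.
pose t j := fun l : 'I_k => if (l < j)%N then a' l else a l.
have step : forall j, (j <= k)%N -> f (t 0%N) phi = f (t j) phi.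
  elim => [//|j IH] jk.
  rewrite IH ?(ltnW jk) //.
  pose o := Ordinal jk.
  have e1 : t j = upd (t j) o (1 *: (a o - a' o) + a' o).
    apply: functional_extensionality => l; rewrite /upd /t scale1r subrK.
    by case: eqP => [->|] //=; rewrite ltnn.
  have e2 : t j.+1 = upd (t j) o (a' o).
    apply: functional_extensionality => l; rewrite /upd /t.
    case: (eqVneq l o) => [->|ne]; first by rewrite /= ltnS leqnn.
    have ne' : (nat_of_ord l != j) by apply: contra ne => /eqP e; apply/eqP/val_inj.
    by rewrite ltnS leq_eqVlt (negbTE ne').
  rewrite e2 {1}e1 fl1 // scale1r.
  rewrite (P1 _ _ phil _ W f fc) ?add0r //.
  by exists o; rewrite upd_at.
have t0 : t 0%N = a by apply: functional_extensionality.
have tk : t k = a' by apply: functional_extensionality => l; rewrite /t ltn_ord.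
by rewrite -t0 -tk; apply: step.
Qed.
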